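(* For all positive integers $p$ and $d$, $$c_\psi(p,d)=\frac{1}{(d-1)!}\sum_{i=1}^{d}s(d,i)\,J_{i-1}(p),$$ where $c_\psi(p,d)$ is the number of primitive points $x\in\mathbb{Z}^d$ with all coordinates positive and $\|x\|_1=p$.
   Context: A point of $\mathbb{Z}^d$ is primitive if its coordinates are relatively prime. $J_q$ is Jordan's totient function: $J_q(p)=p^q\prod_{n}(1-n^{-q})$, the product over the primes $n$ dividing $p$ (so $J_0(1)=1$ and $J_0(p)=0$ for $p>1$). $s(d,i)$ are the signed Stirling numbers of the first kind, given by $s(d+1,i)=-d\,s(d,i)+s(d,i-1)$, $s(i,i)=1$, $s(d,0)=0$ for $d>0$. *)

(* Defs.v *)
From mathcomp Require Import all_boot all_order all_algebra.
Set Implicit Arguments. Unset Strict Implicit. Unset Printing Implicit Defensive.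
Import Order.TTheory GRing.Theory Num.Theory.
Local Open Scope ring_scope.

Fixpoint stirling1 (d i : nat) : int :=
  match d, i with
  | 0%N, 0%N => 1
  | 0%N, _.+1 => 0
  | _.+1, 0%N => 0
  | d'.+1, i'.+1 => - (d'%:Z) * stirling1 d' i'.+1 + stirling1 d' i'
  end.

Definition jordan (q p : nat) : rat :=
  (p%:R) ^+ q * \prod_(n <- primes p) (1 - ((n%:R) ^+ q)^-1).

(* Points x in Z^d with all coordinates positive and ||x||_1 = p are encoded
   as functions 'I_d -> 'I_p.+1 (coordinates are in [1,p]). Primitive means
   the gcd of the coordinates is 1. *)
Definition pos_prim_points (p d : nat) : {set {ffun 'I_d -> 'I_p.+1}} :=
  [set x : {ffun 'I_d -> 'I_p.+1} |
     [&& [forall i, 0 < (x i : nat)]%N,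
         (\sum_(i < d) (x i : nat) == p)%N &
         (\big[gcdn/0%N]_(i < d) (x i : nat) == 1)%N]].

Definition c_psi (p d : nat) : nat := #|pos_prim_points p d|.

(* Main.v *)
Require Import Defs.
From mathcomp Require Import all_boot all_order all_algebra.
From mathcomp Require Import ring lra zify.
Import Order.TTheory GRing.Theory Num.Theory.
Local Open Scope ring_scope.
Set Implicit Arguments. Unset Strict Implicit. Unset Printing Implicit Defensive.

Lemma stirling_big d i : (d < i)%N -> stirling1 d i = 0.
Proof.
elim: d i => [|d IH] [|i] //= lt.
by rewrite !IH ?mulr0 ?addr0 //; lia.
Qed.

Lemma stirling_S0 d : stirling1 d.+1 0 = 0. Proof. by []. Qed.

Lemma stirling_ffact d n :
  \sum_(i < d.+1) (stirling1 d i)%:~R * (n%:R : rat) ^+ i = (n ^_ d)%:R.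
Proof.
elim: d => [|d IH]; first by rewrite big_ord1 /= expr0 mulr1.
rewrite big_ord_recl /= mul0r add0r.
have -> : \sum_(i < d.+1) (stirling1 d.+1 (bump 0 i))%:~R * (n%:R : rat) ^+ bump 0 i
   = - (d%:R) * (\sum_(i < d.+1) (stirling1 d i.+1)%:~R * (n%:R : rat) ^+ i.+1)
     + n%:R * \sum_(i < d.+1) (stirling1 d i)%:~R * (n%:R : rat) ^+ i.
  rewrite !mulr_sumr -big_split /=; apply: eq_bigr => i _.
  rewrite /bump /= add1n rmorphD rmorphM /= rmorphN /= exprS; ring.
have -> : \sum_(i < d.+1) (stirling1 d i.+1)%:~R * (n%:R : rat) ^+ i.+1
   = \sum_(i < d.+1) (stirling1 d i)%:~R * (n%:R : rat) ^+ i - (stirling1 d 0)%:~R.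
  rewrite [in RHS]big_ord_recl [in LHS]big_ord_recr /= stirling_big // mul0r addr0.
  by rewrite expr0 mulr1 addrAC subrr add0r.
rewrite IH ffactnSr.
have h0 : (d%:R : rat) * (stirling1 d 0)%:~R = 0.
  by case: d {IH} => [|d]; rewrite ?mul0r // stirling_S0 mulr0.
transitivity ((n%:R - d%:R) * (n^_d)%:R + (d%:R : rat) * (stirling1 d 0)%:~R).
  ring.
rewrite h0 addr0 natrM mulrC.
case: (leqP d n) => hdn; first by rewrite natrB.
by rewrite ffact_small // !(mul0r, mulr0).
Qed.
Definition comp d n : {set {ffun 'I_d -> 'I_n.+1}} :=
  [set x : {ffun 'I_d -> 'I_n.+1} | [forall i, (0 < x i)%N] && (\sum_(i < d) (x i : nat) == n)%N].


Lemma sum_ge_card d n (x : {ffun 'I_d -> 'I_n.+1}) (i : 'I_d) :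
  [forall i, (0 < x i)%N] -> (x i + d.-1 <= \sum_(j < d) (x j : nat))%N.
Proof.
move=> /forallP pos; rewrite (bigD1 i) //= leq_add2l.
have -> : d.-1 = (\sum_(j < d | j != i) 1)%N.
  by rewrite sum1_card cardC1 card_ord.
by apply: leq_sum => j _; apply: pos.
Qed.
Arguments sum_ge_card {d n x} i.

Lemma card_comp d n : (0 < d)%N -> (0 < n)%N -> #|comp d n| = 'C(n.-1, d.-1).
Proof.
move=> hd hn.
case: (ltnP n d) => hnd.
  rewrite bin_small; last by lia.
  apply/eqP; rewrite cards_eq0; apply/eqP/setP => x; rewrite !inE.
  apply/negbTE/negP => /andP[pos /eqP hs].
  have := sum_ge_card (Ordinal hd) pos; rewrite hs.
  have := (forallP pos) (Ordinal hd); lia.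
set k := (n - d)%N.
pose h (t : d.-tuple 'I_k.+1) : {ffun 'I_d -> 'I_n.+1} :=
  [ffun i => inord (tnth t i).+1].
have hv t i : (h t i : nat) = (tnth t i).+1.
  rewrite ffunE inordK // ltnS (leq_trans (ltn_ord (tnth t i))) //; lia.
have hinj : injective h.
  move=> t1 t2 e; apply: eq_from_tnth => i; apply: val_inj.
  by have := congr1 (fun f : {ffun 'I_d -> 'I_n.+1} => (f i : nat)) e; rewrite !hv => -[].
have -> : comp d n = h @: [set t : d.-tuple 'I_k.+1 | (\sum_(i <- t) (i : nat) == k)%N].
  apply/setP => x; rewrite inE; apply/idP/imsetP.
    case/andP=> pos /eqP hs.
    have hb i : ((x i).-1 < k.+1)%N.
      have h3 := sum_ge_card i pos; rewrite hs in h3; have h4 := (forallP pos) i; rewrite /k; move: h3 h4; set a := nat_of_ord (x i); lia.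
    exists [tuple (inord (x i).-1 : 'I_k.+1) | i < d].
      rewrite inE big_tuple.
      rewrite (eq_bigr (fun i => (x i).-1)); last first.
        by move=> i _; rewrite tnth_mktuple inordK.
      apply/eqP. 
      have e : (\sum_(i < d) (x i).-1 + d = \sum_(i < d) (x i : nat))%N.
        rewrite -[X in (_ + X)%N](card_ord d) -sum1_card -big_split /=.
        apply: eq_bigr => i _; have := (forallP pos) i; set a := nat_of_ord (x i); lia.
      rewrite hs in e; apply/eqP; rewrite -(eqn_add2r d) subnK //; apply/eqP; exact: e.
    apply/ffunP => i; apply: val_inj; rewrite [RHS]hv tnth_mktuple inordK //.
    by have := (forallP pos) i; case: (x i) => -[].
  case=> t; rewrite inE => /eqP hs ->.
  apply/andP; split; first by apply/forallP => i; rewrite hv.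
  rewrite (eq_bigr (fun i => tnth t i + 1)%N); last by move=> i _; rewrite hv addn1.
  have hs2 : (\sum_(i < d) (tnth t i : nat))%N = k by rewrite -[RHS]hs big_tuple.
  rewrite big_split /= sum1_card card_ord hs2 /k subnK //.
rewrite card_imset //.
case: d hd hnd @k h hv hinj => // m _ hnd k h _ _.
rewrite card_ord_partitions; congr 'C(_, _); lia.
Qed.
Definition divall d n r (x : {ffun 'I_d -> 'I_n.+1}) := [forall i, r %| x i]%N.
Definition QL d n (L : seq nat) (x : {ffun 'I_d -> 'I_n.+1}) := all (fun r => ~~ divall r x) L.
Definition NL d L n := #|[set x in comp d n | QL L x]|.

Definition scale d n m r (y : {ffun 'I_d -> 'I_m.+1}) : {ffun 'I_d -> 'I_n.+1} :=
  [ffun i => inord (r * y i)].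

Lemma scale_val d n m r (y : {ffun 'I_d -> 'I_m.+1}) i :
  (r * m = n)%N -> (scale n r y i : nat) = (r * y i)%N.
Proof.
move=> e; rewrite ffunE inordK // ltnS -e leq_mul2l.
by rewrite -ltnS ltn_ord orbT.
Qed.

Lemma QL_scale d n m r L (y : {ffun 'I_d -> 'I_m.+1}) :
  (r * m = n)%N -> prime r -> r \notin L -> all prime L ->
  QL L (scale n r y) = QL L y.
Proof.
move=> e pr nL pL; apply: eq_in_all => r' r'L /=; congr (~~ _).
apply: eq_forallb => i; rewrite scale_val // Gauss_dvdr //.
have pr' := allP pL r' r'L.
rewrite prime_coprime // dvdn_prime2 //; apply/negP => /eqP er.
by move: nL; rewrite -er r'L.
Qed.

Lemma card_div d n r L : (0 < n)%N -> prime r -> (r %| n)%N -> r \notin L -> all prime L ->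
  #|[set x in comp d n | QL L x && divall r x]| = NL d L (n %/ r).
Proof.
move=> hn pr rn nL pL.
set m := (n %/ r)%N.
have e : (r * m = n)%N by rewrite /m mulnC divnK.
have r0 : (0 < r)%N := prime_gt0 pr.
have hinj : injective (@scale d n m r).
  move=> y1 y2 h; apply/ffunP => i; apply: val_inj.
  have := congr1 (fun f : {ffun 'I_d -> 'I_n.+1} => (f i : nat)) h.
  by rewrite /= !scale_val // => /eqP; rewrite eqn_mul2l eqn0Ngt r0 => /eqP.
rewrite /NL -(card_imset _ hinj); apply: eq_card => x.
rewrite !inE; apply/idP/imsetP.
  case/and3P=> /andP[pos /eqP hs] q dv.
  have hb i : ((x i : nat) %/ r < m.+1)%N.
    by rewrite ltnS /m leq_div2r // -ltnS ltn_ord.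
  have ex : forall i, (x i : nat) = (r * ([ffun i => Ordinal (hb i)] i : 'I_m.+1))%N.
      move=> i; rewrite ffunE /= mulnC divnK //; exact: (forallP dv) i.
    have ey : x = scale n r [ffun i => Ordinal (hb i)].
      by apply/ffunP => i; apply: val_inj; rewrite /= scale_val // -ex.
  exists [ffun i => (Ordinal (hb i))]; last exact: ey.
    rewrite inE -(QL_scale _ e) // -ey q andbT.
    rewrite inE.
    apply/andP; split.
      apply/forallP => i; have := (forallP pos) i; rewrite ex muln_gt0.
      by case/andP.
    rewrite -(eqn_pmul2l r0) big_distrr /= e; apply/eqP; rewrite -[RHS]hs.
    by apply: eq_bigr => i _; rewrite ex.
  case=> y; rewrite !inE => /andP[/andP[pos /eqP hs] q] ->.
rewrite (QL_scale _ e) // q /=.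
apply/andP; split; last by apply/forallP => i; rewrite scale_val // dvdn_mulr.
apply/andP; split.
  by apply/forallP => i; rewrite scale_val // muln_gt0 r0 (forallP pos).
rewrite (eq_bigr (fun i => r * y i)%N); last by move=> i _; rewrite scale_val.
by rewrite -big_distrr /= hs e.
Qed.

Lemma NL_cons d r L n : (0 < n)%N -> prime r -> (r %| n)%N -> r \notin L -> all prime L ->
  (NL d (r :: L) n + NL d L (n %/ r) = NL d L n)%N.
Proof.
move=> hn pr rn nL pL; rewrite -card_div // /NL.
rewrite -(cardsID [set x | divall r x] [set x in comp d n | QL L x]) addnC.
congr (_ + _)%N; apply: eq_card => x; rewrite !inE /QL /=.
  by rewrite andbA.
by rewrite andbCA.
Qed.

Definition FL d (L : seq nat) n : rat :=
  ((d.-1)`!%:R)^-1 * \sum_(1 <= i < d.+1) (stirling1 d i)%:~R *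
     ((n%:R) ^+ i.-1 * \prod_(r <- L) (1 - ((r%:R) ^+ i.-1)^-1)).

Lemma FL_cons d r L n : (0 < r)%N -> (r %| n)%N ->
  FL d (r :: L) n = FL d L n - FL d L (n %/ r).
Proof.
move=> r0 rn; rewrite /FL -mulrBr -sumrB; congr (_ * _); apply: eq_big_nat => i _.
rewrite big_cons natr_div // ?unitfE ?pnatr_eq0 -?lt0n // expr_div_n.
set P := \prod_(_ <- _) _; set b := (r%:R ^+ i.-1 : rat).
rewrite /= -/b; ring.
Qed.

Lemma base_sum d n : (0 < d)%N -> (0 < n)%N ->
  \sum_(1 <= i < d.+1) (stirling1 d i)%:~R * ((n%:R : rat) ^+ i.-1 * 1)
    = ((n.-1) ^_ d.-1)%:R.
Proof.
case: d => // d _; case: n => // n _ /=.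
apply: (@mulfI _ (n.+1%:R)); first by rewrite pnatr_eq0.
rewrite -natrM -ffactSS -stirling_ffact big_ord_recl stirling_S0 mul0r add0r.
rewrite mulr_sumr big_add1 big_mkord; apply: eq_bigr => i _.
by rewrite mulr1 lift0 exprS mulrCA.
Qed.

Lemma NL_FL d L n : (0 < d)%N -> (0 < n)%N -> uniq L -> all prime L ->
  all (fun r => r %| n)%N L -> (NL d L n)%:R = FL d L n.
Proof.
move=> hd; elim: L n => [|r L IH] n hn.
  move=> _ _ _; rewrite /NL (eq_card (B := comp d n)); last first.
    by move=> x; rewrite !inE andbT.
  rewrite card_comp // /FL.
  under eq_bigr => i _ do rewrite big_nil.
  by rewrite base_sum // -bin_ffact natrM mulrC mulfK // pnatr_eq0 -lt0n fact_gt0.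
move=> /= /andP[nrL uL] /andP[pr pL] /andP[rn Ln].
have hr := prime_gt0 pr.
have hm : (0 < n %/ r)%N by rewrite divn_gt0 // dvdn_leq.
have Lm : all (fun r' => r' %| n %/ r)%N L.
  apply/allP => r' r'L; have pr' := allP pL _ r'L; have := allP Ln _ r'L.
  rewrite /= -{1}(divnK rn) mulnC Gauss_dvdr // prime_coprime // dvdn_prime2 //.
  by apply/negP => /eqP e; rewrite -e r'L in nrL.
rewrite FL_cons // -IH // -IH // -(NL_cons d hn pr rn nrL pL) natrD addrK //.
Qed.

Lemma gcd_QL d p (x : {ffun 'I_d -> 'I_p.+1}) : (0 < d)%N -> (0 < p)%N ->
  [forall i, (0 < x i)%N] -> (\sum_(i < d) (x i : nat))%N = p ->
  (\big[gcdn/0%N]_(i < d) (x i : nat) == 1)%N = QL (primes p) x.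
Proof.
move=> hd hp pos hs; apply/idP/allP.
  move=> /eqP g1 r; rewrite mem_primes => /and3P[pr _ _]; apply/negP => /forallP dv.
  have : (r %| 1)%N by rewrite -g1; apply/dvdn_biggcdP => i _; exact: dv i.
  by rewrite dvdn1 => /eqP e; rewrite e in pr.
move=> H; set g := \big[gcdn/0%N]_(i < d) (x i : nat).
have gx i : (g %| x i)%N by apply: (biggcdn_inf i).
have g0 : (0 < g)%N by apply: (dvdn_gt0 _ (gx (Ordinal hd))); exact: (forallP pos).
have gp : (g %| p)%N.
  have : (g %| \sum_(i < d) (x i : nat))%N by apply: dvdn_sum => i _; exact: gx.
  by rewrite hs.
case: (ltngtP g 1) => [lt|gt|//]; first by move: g0 lt; lia.
have pr := pdiv_prime gt; have rg := pdiv_dvd g.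
have := H (pdiv g); rewrite mem_primes pr hp (dvdn_trans rg gp) => /(_ isT) /negP; case.
by apply/forallP => i; exact: dvdn_trans rg (gx i).
Qed.

Theorem theorem2p4 (p d : nat) (hp : (0 < p)%N) (hd : (0 < d)%N) :
  (c_psi p d)%:R =
    ((d.-1)`!%:R)^-1 *
      \sum_(1 <= i < d.+1) (stirling1 d i)%:~R * jordan i.-1 p :> rat.
Proof.
have -> : c_psi p d = NL d (primes p) p.
  rewrite /c_psi /NL; apply: eq_card => x; rewrite !inE.
  case pos: [forall i, _] => //=; case hs: (_ == p)%N => //=.
  by apply: gcd_QL => //; apply/eqP.
rewrite NL_FL // ?primes_uniq ?all_prime_primes //.
by apply/allP => r; rewrite mem_primes => /and3P[].
Qed.
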